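(* For every integer $n>24$, the generalized Petersen graph $GP(n,4)$ is not $\ell$-distance-balanced for any integer $\ell$ with $3\le \ell<{\rm diam}(GP(n,4))$.
   Context: For a connected graph $G$ and $x,y\in V(G)$, $d_G(x,y)$ denotes the distance and ${\rm diam}(G)$ the diameter. Let $W_{xy}=\{w\in V(G): d_G(w,x)<d_G(w,y)\}$. $G$ is called $\ell$-distance-balanced if $|W_{xy}|=|W_{yx}|$ for every pair $x,y\in V(G)$ with $d_G(x,y)=\ell$. For integers $n\ge 3$ and $1\le k<n/2$, the generalized Petersen graph $GP(n,k)$ has vertex set $\{u_i: i\in\mathbb{Z}_n\}\cup\{v_i: i\in\mathbb{Z}_n\}$ and edge set $\{u_iu_{i+1}: i\in\mathbb{Z}_n\}\cup\{v_iv_{i+k}: i\in\mathbb{Z}_n\}\cup\{u_iv_i: i\in\mathbb{Z}_n\}$. *)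

(* Defs.v *)
From mathcomp Require Import all_boot.
Set Implicit Arguments. Unset Strict Implicit. Unset Printing Implicit Defensive.

Section GraphDist.
Variable T : finType.
Variable e : rel T.

Fixpoint ball (m : nat) (x : T) : {set T} :=
  match m with
  | 0 => [set x]
  | m'.+1 => ball m' x :|: [set y | [exists z in ball m' x, e z y]]
  end.

(* graph distance: least m with y in ball m x (any finite distance is < #|T|);
   for unreachable y the value is #|T| (irrelevant for connected graphs) *)
Definition dist (x y : T) : nat := find (fun m => y \in ball m x) (iota 0 #|T|).

Definition diam : nat := \max_(x : T) \max_(y : T) dist x y.

Definition W (x y : T) : {set T} := [set w | dist w x < dist w y].

Definition dist_balanced (l : nat) : Prop :=
  forall x y : T, dist x y = l -> #|W x y| = #|W y x|.
End GraphDist.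

(* Generalized Petersen graph GP(n,k): vertex (false,i) is u_i, (true,i) is v_i. *)
Definition GPvert (n : nat) := (bool * 'I_n)%type.


Definition GP (n k : nat) : rel (GPvert n) := fun a b =>
  let i := val a.2 in let j := val b.2 in
  match a.1, b.1 with
  | false, false => (j == (i + 1) %% n) || (i == (j + 1) %% n)
  | true, true => (j == (i + k) %% n) || (i == (j + k) %% n)
  | _, _ => i == j
  end.
Arguments GP : clear implicits.

(* Main.v *)
Require Import Defs.
From mathcomp Require Import zify.
From mathcomp Require Import all_boot.
Set Implicit Arguments. Unset Strict Implicit. Unset Printing Implicit Defensive.

Lemma find_iota_le k s N : s <= k < s + N ->
  find (fun m => k <= m) (iota s N) = k - s.
Proof.
elim: N s => [|N IH] s /=; first by lia.
move=> H; case: ifP => Hk; first by lia.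
rewrite IH; lia.
Qed.

Section DistChar.
Variable T : finType.
Variable e : rel T.
Variable x0 : T.
Variable f : T -> nat.
Hypothesis f0 : forall b, (f b == 0) = (b == x0).
Hypothesis flip : forall a b, e a b -> f b <= (f a).+1.
Hypothesis fdesc : forall b, 0 < f b -> exists a, e a b /\ (f a).+1 = f b.
Hypothesis fbound : forall b, f b < #|T|.

Lemma ball_char m b : (b \in ball e m x0) = (f b <= m).
Proof.
elim: m b => [|m IH] b /=.
  by rewrite in_set1 leqn0 f0.
rewrite in_setU in_set IH.
apply/idP/idP.
  case/orP => [H|]; first by lia.
  case/existsP => z /andP [Hz Hzb]; rewrite IH in Hz.
  by have := flip Hzb; lia.
move=> H; case: (leqP (f b) m) => [Hle|Hlt]; first by apply/orP; left.
idtac.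
have Hfb : f b = m.+1 by lia.
have [a [Hab Ha]] : exists a, e a b /\ (f a).+1 = f b by apply: fdesc; lia.
apply/orP; right; apply/existsP; exists a; rewrite IH Hab andbT; lia.
Qed.

Lemma dist_char b : dist e x0 b = f b.
Proof.
rewrite /dist.
rewrite (eq_find (a2 := fun m => f b <= m)); last by move=> m; rewrite ball_char.
rewrite find_iota_le ?subn0 //; have := fbound b; lia.
Qed.
End DistChar.

Definition duu z := minn z (z %/ 4 + 2 + minn (z %% 4) 2).
Definition duv z := z %/ 4 + 1 + minn (z %% 4) 2.
Definition dvv z := z %/ 4 + 2 * minn (z %% 4) 1 + minn (z %% 4) 2.
Definition dl (b1 b2 : bool) (z : nat) : nat :=
  if b1 then (if b2 then dvv z else duv z) else (if b2 then duv z else duu z).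
Definition Dn n b1 b2 z := minn (dl b1 b2 z) (dl b1 b2 (n - z)).
Definition adist (i j : nat) := (i - j) + (j - i).
Definition Rs s w w' := (w' = w + s) \/ (w = w' + s) \/ (w + w' = s).

Lemma dl_sym b1 b2 z : dl b1 b2 z = dl b2 b1 z.
Proof. by case: b1; case: b2. Qed.

Lemma dl_R1 b0 w w' : Rs 1 w w' -> dl b0 false w' <= dl b0 false w + 1.
Proof. rewrite /Rs /dl /duu /duv; case: b0; lia. Qed.
Lemma dl_R4 b0 w w' : Rs 4 w w' -> dl b0 true w' <= dl b0 true w + 1.
Proof. rewrite /Rs /dl /dvv /duv; case: b0; lia. Qed.
Lemma dl_sp b0 b w : dl b0 (~~ b) w <= dl b0 b w + 1.
Proof. rewrite /dl /dvv /duv /duu; case: b0; case: b => /=; lia. Qed.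
Lemma dl_small b0 b w : w <= 4 -> dl b0 b w <= 4.
Proof. rewrite /dl /dvv /duv /duu; case: b0; case: b => /=; lia. Qed.
Lemma dl_lo b0 b w : w <= 4 * dl b0 b w + 3.
Proof. rewrite /dl /dvv /duv /duu; case: b0; case: b => /=; lia. Qed.
Lemma dl_hi b0 b w : 4 * dl b0 b w <= w + 16.
Proof. rewrite /dl /dvv /duv /duu; case: b0; case: b => /=; lia. Qed.
Lemma dl_eq0 b0 b w : dl b0 b w = 0 -> b0 = b /\ w = 0.
Proof. rewrite /dl /dvv /duv /duu; case: b0; case: b => /=; lia. Qed.
Lemma dl_00 b : dl b b 0 = 0.
Proof. by case: b. Qed.

Definition dstep (b b' : bool) (w w' : nat) :=
  (b = false /\ b' = false /\ (w' + 1 = w \/ w' = w + 1)) \/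
  (b = true /\ b' = true /\ (w' + 4 = w \/ w' + w = 4)) \/
  (b' = ~~ b /\ w' = w).

Lemma dl_desc b0 b w : 0 < dl b0 b w ->
  exists b' w', dstep b b' w w' /\ (dl b0 b' w').+1 = dl b0 b w.
Proof.
rewrite /dstep /dl; case: b0; case: b => /= H.
-
  have [Hr|Hr] : w %% 4 = 0 \/ 0 < w %% 4 by lia.
  + exists true, (w - 4); rewrite /dvv in H *; lia.
  + exists false, w; rewrite /dvv /duv in H *; lia.
-
  have [Hr|[Hr|Hr]] : w %% 4 = 0 \/ (w %% 4 = 1 \/ w %% 4 = 2) \/ w %% 4 = 3 by lia.
  + exists true, w; rewrite /dvv /duv in H *; lia.
  + exists false, (w - 1); rewrite /duv in H *; lia.
  + exists false, (w + 1); rewrite /duv in H *; lia.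
-
  have [Hr|[Hr|Hr]] : 4 <= w \/ w = 3 \/ w <= 2 by lia.
  + exists true, (w - 4); rewrite /duv in H *; lia.
  + exists true, 1; rewrite /duv in H *; lia.
  + exists false, w; rewrite /duu /duv in H *; lia.
-
  have [Hr|Hr] : w <= w %/ 4 + 2 + minn (w %% 4) 2 \/ w %/ 4 + 2 + minn (w %% 4) 2 < w by lia.
  + exists false, (w - 1); rewrite /duu in H *; lia.
  + exists true, w; rewrite /duu /duv in H *; lia.
Qed.

Lemma modn_wrap x n : 0 < n -> x < 2 * n ->
  (x < n /\ x %% n = x) \/ (n <= x /\ x %% n = x - n).
Proof.
move=> Hn Hx; case: (ltnP x n) => H.
  by left; rewrite modn_small.
right; split => //.
by rewrite -{1}(subnK H) modnDr modn_small //; lia.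
Qed.

Lemma lip_lift (P : nat -> nat) s n da db :
  (forall w w', Rs s w w' -> P w' <= P w + 1) ->
  (forall w, w <= 4 -> P w <= 4) ->
  (forall w, w <= 4 * P w + 3) ->
  24 <= n -> da < n -> db < n -> s <= 4 ->
  (db = da + s \/ db + n = da + s \/ da = db + s \/ da + n = db + s) ->
  minn (P db) (P (n - db)) <= (minn (P da) (P (n - da))).+1.
Proof.
move=> HR Hsm Hlo Hn Ha Hb Hs H.
case: H => [H|[H|[H|H]]].
- have h1 : P db <= P da + 1 by apply: HR; rewrite /Rs; lia.
  have h2 : P (n - db) <= P (n - da) + 1 by apply: HR; rewrite /Rs; lia.
  lia.
- have h1 : P db <= P (n - da) + 1 by apply: HR; rewrite /Rs; lia.
  have h4 := Hsm db; have h5 := Hlo da. lia.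
- have h1 : P db <= P da + 1 by apply: HR; rewrite /Rs; lia.
  have h2 : P (n - db) <= P (n - da) + 1 by apply: HR; rewrite /Rs; lia.
  lia.
- have h1 : P (n - db) <= P da + 1 by apply: HR; rewrite /Rs; lia.
  have h4 := Hsm (n - db); have h5 := Hlo (n - da). lia.
Qed.

Section GPdist.
Variable n : nat.
Hypothesis Hn : 24 <= n.
Variable b0 : bool.
Variable i0 : 'I_n.

Lemma n_pos : 0 < n. Proof. lia. Qed.

Definition dd (i : nat) := if i0 <= i then i - i0 else i + n - i0.

Lemma dd_lt i : i < n -> dd i < n.
Proof. rewrite /dd; have := ltn_ord i0; case: ifP; lia. Qed.

Definition fd (v : GPvert n) := Dn n b0 v.1 (dd v.2).

Lemma dd_step s (ia ic : 'I_n) : s <= 4 ->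
  (nat_of_ord ic = (ia + s) %% n \/ nat_of_ord ia = (ic + s) %% n) ->
  (dd ic = dd ia + s \/ dd ic + n = dd ia + s \/ dd ia = dd ic + s \/ dd ia + n = dd ic + s).
Proof.
move=> Hs H.
have Ha := ltn_ord ia; have Hc := ltn_ord ic; have H0 := ltn_ord i0.
have Hw1 := @modn_wrap (ia + s) n n_pos ltac:(lia); have Hw2 := @modn_wrap (ic + s) n n_pos ltac:(lia).
have {H Hw1 Hw2} : (nat_of_ord ic = ia + s \/ nat_of_ord ic + n = ia + s) \/
             (nat_of_ord ia = ic + s \/ nat_of_ord ia + n = ic + s).
  case: H => ->; [left|right].
    by case: Hw1 => [[h ->]|[h ->]]; [left|right; lia]; lia.
  by case: Hw2 => [[h ->]|[h ->]]; [left|right; lia]; lia.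
rewrite /dd; case: (leqP i0 ia) => ?; case: (leqP i0 ic) => ?; lia.
Qed.

End GPdist.

Section GPdist2.
Variable n : nat.
Hypothesis Hn : 24 <= n.
Variable b0 : bool.
Variable i0 : 'I_n.
Lemma fd_lip a c : GP n 4 a c -> fd b0 i0 c <= (fd b0 i0 a).+1.
Proof.
case: a => ba ia; case: c => bc ic.
rewrite /GP /fd /Dn /=.
have Ha := dd_lt Hn i0 (ltn_ord ia); have Hc := dd_lt Hn i0 (ltn_ord ic).
case: ba; case: bc => /=.
- move=> H.
  have H' : nat_of_ord ic = (ia + 4) %% n \/ nat_of_ord ia = (ic + 4) %% n.
    by case/orP: H => /eqP H; [left|right].
  have := dd_step Hn i0 (s := 4) (ia := ia) (ic := ic) (leqnn _) H'.
  apply: (@lip_lift (dl b0 true) 4 n (dd i0 ia) (dd i0 ic)) => //; [exact: dl_R4 | exact: dl_small | exact: dl_lo].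
- move/eqP=> E; have -> : ic = ia by apply: val_inj.
  have := dl_sp b0 true (dd i0 ia); have := dl_sp b0 true (n - dd i0 ia); simpl. lia.
- move/eqP=> E; have -> : ic = ia by apply: val_inj.
  have := dl_sp b0 false (dd i0 ia); have := dl_sp b0 false (n - dd i0 ia); simpl. lia.
- move=> H.
  have H' : nat_of_ord ic = (ia + 1) %% n \/ nat_of_ord ia = (ic + 1) %% n.
    by case/orP: H => /eqP H; [left|right].
  have := dd_step Hn i0 (s := 1) (ia := ia) (ic := ic) (isT : 1 <= 4) H'.
  apply: (@lip_lift (dl b0 false) 1 n (dd i0 ia) (dd i0 ic)) => //; [exact: dl_R1 | exact: dl_small | exact: dl_lo].
Qed.

Section Nbr.
Variable i : 'I_n.
Definition ip s : 'I_n := Ordinal (ltn_pmod (i + s) (n_pos Hn)).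
Definition im s : 'I_n := Ordinal (ltn_pmod (i + n - s) (n_pos Hn)).

Lemma ddp s : s <= 4 -> dd i0 (ip s) = dd i0 i + s \/ dd i0 (ip s) + n = dd i0 i + s.
Proof.
move=> Hs; have Hi := ltn_ord i; have H0 := ltn_ord i0.
have [[h1 h2]|[h1 h2]] := @modn_wrap (i + s) n (n_pos Hn) ltac:(lia);
  rewrite /ip /dd /= h2; case: (leqP i0 i) => ?; case: leqP => ?; lia.
Qed.

Lemma ddm s : s <= 4 -> dd i0 (im s) + s = dd i0 i \/ dd i0 (im s) + s = dd i0 i + n.
Proof.
move=> Hs; have Hi := ltn_ord i; have H0 := ltn_ord i0.
have [[h1 h2]|[h1 h2]] := @modn_wrap (i + n - s) n (n_pos Hn) ltac:(lia);
  rewrite /im /dd /= h2; case: (leqP i0 i) => ?; case: leqP => ?; lia.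
Qed.

Lemma edge_p b s : (b = false /\ s = 1) \/ (b = true /\ s = 4) -> GP n 4 (b, ip s) (b, i).
Proof.
by case=> [[-> ->]|[-> ->]]; rewrite /GP /= eqxx orbT.
Qed.

Lemma modm s : s <= 4 -> ((i + n - s) %% n + s) %% n = i.
Proof.
move=> Hs; rewrite modnDml.
have -> : i + n - s + s = i + n by lia.
by rewrite modnDr modn_small.
Qed.

Lemma edge_m b s : (b = false /\ s = 1) \/ (b = true /\ s = 4) -> GP n 4 (b, im s) (b, i).
Proof.
by case=> [[-> ->]|[-> ->]]; rewrite /GP /= modm // eqxx.
Qed.

Lemma edge_s b : GP n 4 (~~ b, i) (b, i).
Proof. by case: b; rewrite /GP /= eqxx. Qed.

Lemma nbr b b' w w' : dstep b b' w w' ->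
  (w = dd i0 i \/ (w = n - dd i0 i /\ 0 < dd i0 i)) ->
  exists i' : 'I_n, GP n 4 (b', i') (b, i) /\ (w' = dd i0 i' \/ w' = n - dd i0 i').
Proof.
have Hd := dd_lt Hn i0 (ltn_ord i).
rewrite /dstep => [[[-> [-> H]]|[[-> [-> H]]|[-> ->]]]] Hw.
- case: Hw => Hw; case: H => H.
  + exists (im 1); split; first by apply: edge_m; left.
    have := ddm (isT : 1 <= 4); have := dd_lt Hn i0 (ltn_ord (im 1)); lia.
  + exists (ip 1); split; first by apply: edge_p; left.
    have := ddp (isT : 1 <= 4); have := dd_lt Hn i0 (ltn_ord (ip 1)); lia.
  + exists (ip 1); split; first by apply: edge_p; left.
    have := ddp (isT : 1 <= 4); have := dd_lt Hn i0 (ltn_ord (ip 1)); lia.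
  + exists (im 1); split; first by apply: edge_m; left.
    have := ddm (isT : 1 <= 4); have := dd_lt Hn i0 (ltn_ord (im 1)); lia.
- case: Hw => Hw; case: H => H.
  + exists (im 4); split; first by apply: edge_m; right.
    have := ddm (isT : 4 <= 4); have := dd_lt Hn i0 (ltn_ord (im 4)); lia.
  + exists (im 4); split; first by apply: edge_m; right.
    have := ddm (isT : 4 <= 4); have := dd_lt Hn i0 (ltn_ord (im 4)); lia.
  + exists (ip 4); split; first by apply: edge_p; right.
    have := ddp (isT : 4 <= 4); have := dd_lt Hn i0 (ltn_ord (ip 4)); lia.
  + exists (ip 4); split; first by apply: edge_p; right.
    have := ddp (isT : 4 <= 4); have := dd_lt Hn i0 (ltn_ord (ip 4)); lia.
- exists i; split; first exact: edge_s.
  lia.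
Qed.
End Nbr.

Lemma fd_desc c : 0 < fd b0 i0 c -> exists a, GP n 4 a c /\ (fd b0 i0 a).+1 = fd b0 i0 c.
Proof.
case: c => b i; rewrite /fd /Dn /= => Hpos.
have Hd := dd_lt Hn i0 (ltn_ord i).
set d := dd i0 i in Hpos Hd *.
have [w [Hw Hfw]] : exists w, (w = d \/ (w = n - d /\ 0 < d)) /\
    minn (dl b0 b d) (dl b0 b (n - d)) = dl b0 b w.
  case: (leqP (dl b0 b d) (dl b0 b (n - d))) => H.
    by exists d; split; [left | lia].
  exists (n - d); split; last by lia.
  right; split => //.
  case: (posnP d) => // Hd0.
  move: H; rewrite Hd0 subn0 => H.
  have h1 := @dl_small b0 b 0 isT; have h2 := dl_lo b0 b n; lia.
rewrite Hfw in Hpos.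
have [b' [w' [Hst Hdl]]] := dl_desc Hpos.
have [i' [He Hw']] := nbr Hst Hw.
exists (b', i'); split => //.
have := fd_lip He; rewrite /fd /Dn /= -/d.
have : minn (dl b0 b' (dd i0 i')) (dl b0 b' (n - dd i0 i')) <= dl b0 b' w'.
  by case: Hw' => ->; rewrite geq_min leqnn ?orbT.
rewrite Hfw -Hdl; lia.
Qed.

End GPdist2.

Lemma Dn_flip n b1 b2 z : z <= n -> Dn n b1 b2 (n - z) = Dn n b1 b2 z.
Proof. by move=> H; rewrite /Dn subKn // minnC. Qed.

Lemma dist_GP n (Hn : 24 <= n) (a c : GPvert n) :
  dist (GP n 4) a c = Dn n a.1 c.1 (adist a.2 c.2).
Proof. Set Ltac Backtrace.
case: a => b0 i0.
rewrite (@dist_char _ _ _ (fd b0 i0)).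
- case: c => b i; rewrite /fd /dd /adist /=; have := ltn_ord i0; have := ltn_ord i.
  case: (leqP i0 i) => H h1 h2.
    by congr Dn; lia.
  rewrite -(@Dn_flip n b0 b ((i0 - i) + (i - i0))); last by lia.
  by congr Dn; lia.
- case=> b i; rewrite /fd /Dn /= xpair_eqE.
  have Hd := dd_lt Hn i0 (ltn_ord i).
  apply/eqP/andP.
    move=> H.
    have [H1|H1] : dl b0 b (dd i0 i) = 0 \/ dl b0 b (n - dd i0 i) = 0 by lia.
    + have [-> Hz] := dl_eq0 H1; split => //.
      apply/eqP/val_inj => /=; move: Hz; rewrite /dd; have := ltn_ord i0; have := ltn_ord i.
      case: (leqP i0 i); lia.
    + have [_ H2] := dl_eq0 H1; lia.
  case=> /eqP -> /eqP ->; rewrite /dd leqnn subnn dl_00; lia.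
- exact: fd_lip.
- exact: fd_desc.
- case=> b i; rewrite card_prod card_bool card_ord /fd /Dn /=.
  have := dl_hi b0 b (dd i0 i); have := dd_lt Hn i0 (ltn_ord i); lia.
Qed.

Lemma Dn_bound n b1 b2 z : 24 <= n -> z < n -> Dn n b1 b2 z <= (n + 4) %/ 8 + 3.
Proof.
move=> Hn Hz; rewrite /Dn /dl /duu /duv /dvv; case: b1; case: b2; lia.
Qed.

Definition cX n j b i := Dn n b false i < Dn n b true (adist i j).
Definition cY n j b i := Dn n b true (adist i j) < Dn n b false i.

Lemma GX b z z' : z + 11 <= z' -> dl b false z < dl b true z'.
Proof. rewrite /dl /duu /duv /dvv; case: b; lia. Qed.
Lemma GY b z z' : z + 11 <= z' -> dl b true z < dl b false z'.
Proof. rewrite /dl /duu /duv /dvv; case: b; lia. Qed.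
Lemma G8a b z : dl b true z < dl b false (z + 8).
Proof. rewrite /dl /duu /duv /dvv; case: b; lia. Qed.
Lemma G8b b z : dl b false z < dl b true (z + 8).
Proof. rewrite /dl /duu /duv /dvv; case: b; lia. Qed.

Lemma bulk1 n j b i : (j = 8 \/ 11 <= j) -> j + 11 <= n ->
  i < j %/ 2 - 5 -> cX n j b i.
Proof.
move=> Hj Hjn Hi; rewrite /cX /Dn /adist.
have -> : i - j + (j - i) = j - i by lia.
have h1 := @GX b i (j - i) ltac:(lia).
have h2 := @GX b i (n - (j - i)) ltac:(lia).
lia.
Qed.

Lemma bulk2 n j b i : (j = 8 \/ 11 <= j) -> j + 11 <= n -> i < n ->
  j %/ 2 + 6 <= i -> i + 5 < ((n + j) %/ 2) -> cY n j b i.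
Proof.
move=> Hj Hjn Hin Hi1 Hi2; rewrite /cY /Dn /adist.
case: (leqP i j) => Hij.
  have -> : i - j + (j - i) = j - i by lia.
  have h1 := @GY b (j - i) i ltac:(lia).
  have h2 := @GY b (j - i) (n - i) ltac:(lia).
  lia.
have -> : i - j + (j - i) = i - j by lia.
have h2 := @GY b (i - j) (n - i) ltac:(lia).
case: Hj => Hj.
  subst j; have h1 := G8a b (i - 8).
  have E : i - 8 + 8 = i by lia.
  rewrite E in h1; lia.
have h1 := @GY b (i - j) i ltac:(lia).
lia.
Qed.

Lemma bulk3 n j b i : (j = 8 \/ 11 <= j) -> j + 11 <= n -> i < n ->
  (n + j) %/ 2 + 6 <= i -> cX n j b i.
Proof.
move=> Hj Hjn Hin Hi; rewrite /cX /Dn /adist.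
have -> : i - j + (j - i) = i - j by lia.
have h1 := @GX b (n - i) (i - j) ltac:(lia).
case: Hj => Hj.
  subst j; have h2 := G8b b (n - i).
  have E : n - (i - 8) = n - i + 8 by lia.
  rewrite E; lia.
have h2 := @GX b (n - i) (n - (i - j)) ltac:(lia).
lia.
Qed.

Lemma dl_shift b c z : 4 <= z -> dl b c (z + 4) = (dl b c z).+1.
Proof. rewrite /dl /duu /duv /dvv; case: b; case: c; lia. Qed.

Lemma dl_sel b c z z' : z + 20 <= z' -> dl b c z <= dl b c z'.
Proof. move=> H; have := dl_hi b c z; have := dl_lo b c z'; lia. Qed.

Lemma Dn_sel n b c z : z + 20 <= n - z -> Dn n b c z = dl b c z.
Proof. move=> H; have := dl_sel b c H; rewrite /Dn; lia. Qed.

Lemma win_sum a k (F : nat -> nat) :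
  \sum_(a <= i < a + k) F i = sumn [seq F (a + c) | c <- iota 0 k].
Proof.
rewrite sumnE big_map /index_iota addKn -{1}(addn0 a) iotaDl big_map.
by apply: eq_bigr.
Qed.

Definition midVX b j := sumn [seq nat_of_bool
  (dl b false (j %/ 2 - 5 + c) < dl b true (adist (j %/ 2 - 5 + c) j)) | c <- iota 0 11].
Definition midVY b j := sumn [seq nat_of_bool
  (dl b true (adist (j %/ 2 - 5 + c) j) < dl b false (j %/ 2 - 5 + c)) | c <- iota 0 11].
Definition antiVX b q e j := sumn [seq nat_of_bool
  (minn (dl b false (q + j - 5 + c)) (dl b false (q + e + 5 - c)) <
   minn (dl b true (q - 5 + c)) (dl b true (q + e + j + 5 - c))) | c <- iota 0 11].
Definition antiVY b q e j := sumn [seq nat_of_bool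
  (minn (dl b true (q - 5 + c)) (dl b true (q + e + j + 5 - c)) <
   minn (dl b false (q + j - 5 + c)) (dl b false (q + e + 5 - c))) | c <- iota 0 11].

Lemma mid_shift b j : 24 <= j -> midVX b (j + 8) = midVX b j /\ midVY b (j + 8) = midVY b j.
Proof.
move=> Hj; rewrite /midVX /midVY; split; congr sumn; apply/eq_in_map => c;
  rewrite mem_iota => /andP [_ Hc].
- have E1 : (j + 8) %/ 2 - 5 + c = (j %/ 2 - 5 + c) + 4 by lia.
  have E2 : adist ((j + 8) %/ 2 - 5 + c) (j + 8) = adist (j %/ 2 - 5 + c) j + 4
    by rewrite /adist; lia.
  rewrite E2 E1 !dl_shift ?ltnS //; rewrite /adist; lia.
- have E1 : (j + 8) %/ 2 - 5 + c = (j %/ 2 - 5 + c) + 4 by lia.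
  have E2 : adist ((j + 8) %/ 2 - 5 + c) (j + 8) = adist (j %/ 2 - 5 + c) j + 4
    by rewrite /adist; lia.
  rewrite E2 E1 !dl_shift ?ltnS //; rewrite /adist; lia.
Qed.

Lemma mid_rep b j : 24 <= j ->
  midVX b j = midVX b (24 + j %% 8) /\ midVY b j = midVY b (24 + j %% 8).
Proof.
move=> Hj.
suff H : forall k, midVX b (24 + j %% 8 + 8 * k) = midVX b (24 + j %% 8) /\
                   midVY b (24 + j %% 8 + 8 * k) = midVY b (24 + j %% 8).
  have [h1 h2] := H ((j - 24) %/ 8).
  have E : 24 + j %% 8 + 8 * ((j - 24) %/ 8) = j by lia.
  by rewrite E in h1 h2.
elim=> [|k [IH1 IH2]]; first by rewrite muln0 addn0.
have E2 : 24 + j %% 8 + 8 * k.+1 = (24 + j %% 8 + 8 * k) + 8 by lia.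
have Hk : 24 <= 24 + j %% 8 + 8 * k by lia.
rewrite E2; have [-> ->] := mid_shift b Hk.
by split.
Qed.

Lemma anti_shift b q e j : 9 <= q ->
  antiVX b (q + 4) e j = antiVX b q e j /\ antiVY b (q + 4) e j = antiVY b q e j.
Proof.
move=> Hq; rewrite /antiVX /antiVY; split; congr sumn; apply/eq_in_map => c;
  rewrite mem_iota => /andP [_ Hc].
- have E1 : q + 4 + j - 5 + c = (q + j - 5 + c) + 4 by lia.
  have E2 : q + 4 + e + 5 - c = (q + e + 5 - c) + 4 by lia.
  have E3 : q + 4 - 5 + c = (q - 5 + c) + 4 by lia.
  have E4 : q + 4 + e + j + 5 - c = (q + e + j + 5 - c) + 4 by lia.
  rewrite E1 E2 E3 E4 !dl_shift ?minnSS ?ltnS //; lia.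
- have E1 : q + 4 + j - 5 + c = (q + j - 5 + c) + 4 by lia.
  have E2 : q + 4 + e + 5 - c = (q + e + 5 - c) + 4 by lia.
  have E3 : q + 4 - 5 + c = (q - 5 + c) + 4 by lia.
  have E4 : q + 4 + e + j + 5 - c = (q + e + j + 5 - c) + 4 by lia.
  rewrite E1 E2 E3 E4 !dl_shift ?minnSS ?ltnS //; lia.
Qed.

Lemma anti_rep b q e j : 9 <= q ->
  antiVX b q e j = antiVX b (9 + (q - 9) %% 4) e j /\
  antiVY b q e j = antiVY b (9 + (q - 9) %% 4) e j.
Proof.
move=> Hq.
suff H : forall k, antiVX b (9 + (q - 9) %% 4 + 4 * k) e j = antiVX b (9 + (q - 9) %% 4) e j /\
                   antiVY b (9 + (q - 9) %% 4 + 4 * k) e j = antiVY b (9 + (q - 9) %% 4) e j.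
  have [h1 h2] := H ((q - 9) %/ 4).
  have E : 9 + (q - 9) %% 4 + 4 * ((q - 9) %/ 4) = q by lia.
  by rewrite E in h1 h2.
elim=> [|k [IH1 IH2]]; first by rewrite muln0 addn0.
have E2 : 9 + (q - 9) %% 4 + 4 * k.+1 = (9 + (q - 9) %% 4 + 4 * k) + 4 by lia.
have Hk : 9 <= 9 + (q - 9) %% 4 + 4 * k by lia.
rewrite E2; have [-> ->] := anti_shift b e j Hk.
by split.
Qed.

Lemma anti_sel b q e j : 31 <= j -> 9 <= q -> e <= 1 ->
  antiVX b q e j = antiVX b q e 32 /\ antiVY b q e j = antiVY b q e 32.
Proof.
move=> Hj Hq He; rewrite /antiVX /antiVY; split; congr sumn; apply/eq_in_map => c;
  rewrite mem_iota => /andP [_ Hc];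
  have h1 := @dl_sel b false (q + e + 5 - c) (q + j - 5 + c) ltac:(lia);
  have h2 := @dl_sel b false (q + e + 5 - c) (q + 32 - 5 + c) ltac:(lia);
  have h3 := @dl_sel b true (q - 5 + c) (q + e + j + 5 - c) ltac:(lia);
  have h4 := @dl_sel b true (q - 5 + c) (q + e + 32 + 5 - c) ltac:(lia);
  rewrite (minn_idPr h1) (minn_idPr h2) (minn_idPl h3) (minn_idPl h4) //.
Qed.

Definition midOK j := midVX false j + midVX true j + 4 * (j %/ 2 - 5) + 20 <=
  midVY false j + midVY true j + 2 * j.
Definition antiOK q e j := antiVX false q e j + antiVX true q e j + 2 + 2 * e <=
  antiVY false q e j + antiVY true q e j.

Lemma midOK_tab : all midOK (8 :: iota 11 21). Proof. vm_compute. reflexivity. Qed.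
Lemma antiOK_tab : all (fun q => all (fun e => all (antiOK q e) (8 :: 32 :: iota 11 20)) [:: 0; 1]) (iota 9 4).
Proof. vm_compute. reflexivity. Qed.

Lemma midOK_all j : j = 8 \/ 11 <= j -> midOK j.
Proof.
move=> Hj.
have T := midOK_tab.
case: (ltnP j 32) => Hj32.
  move/allP: T => T; apply: T.
  case: Hj => [->|Hj]; first by rewrite inE eqxx.
  by rewrite in_cons mem_iota; apply/orP; right; lia.
have Hr : 24 + j %% 8 \in 8 :: iota 11 21 by rewrite in_cons mem_iota; apply/orP; right; lia.
move/allP: T => /(_ _ Hr).
have Hj24 : 24 <= j by lia.
have [h1 h2] := mid_rep false Hj24.
have [h3 h4] := mid_rep true Hj24.
rewrite /midOK h1 h2 h3 h4.
have E1 : (24 + j %% 8) %/ 2 = 12 + (j %% 8) %/ 2 by lia.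
have E2 : j %/ 2 = 4 * (j %/ 8) + (j %% 8) %/ 2 by lia.
rewrite E1 E2; lia.
Qed.

Lemma antiOK_all q e j : 9 <= q -> e <= 1 -> (j = 8 \/ 11 <= j) -> antiOK q e j.
Proof.
move=> Hq He Hj.
have T := antiOK_tab.
set j' := if 31 <= j then 32 else j.
have Hj' : antiOK q e j = antiOK q e j'.
  rewrite /j'; case: ifP => // H31.
  have [h1 h2] := @anti_sel false q e j H31 Hq He.
  have [h3 h4] := @anti_sel true q e j H31 Hq He.
  by rewrite /antiOK h1 h2 h3 h4.
rewrite Hj' /antiOK.
have [h1 h2] := @anti_rep false q e j' Hq.
have [h3 h4] := @anti_rep true q e j' Hq.
rewrite h1 h2 h3 h4.
move/allP: T => /(_ (9 + (q - 9) %% 4)) T.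
have : 9 + (q - 9) %% 4 \in iota 9 4 by rewrite mem_iota; lia.
move/T/allP => /(_ e) T2.
have : e \in [:: 0; 1] by rewrite !inE; lia.
move/T2/allP => /(_ j'); apply.
rewrite /j'; case: ifP => H31; first by rewrite !inE eqxx orbT.
case: Hj => [->|Hj]; first by rewrite inE eqxx.
by rewrite 2!in_cons mem_iota; apply/orP; right; apply/orP; right; lia.
Qed.

Lemma seg_all a b (P : nat -> bool) : (forall i, a <= i < b -> P i) ->
  \sum_(a <= i < b) (P i : nat) = b - a.
Proof.
move=> H; rewrite (eq_big_nat _ _ (F2 := fun _ => 1)); last by move=> i /H ->.
by rewrite sum_nat_const_nat muln1.
Qed.

Lemma seg_none a b (P : nat -> bool) : (forall i, a <= i < b -> ~~ P i) ->
  \sum_(a <= i < b) (P i : nat) = 0.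
Proof.
move=> H; rewrite (eq_big_nat _ _ (F2 := fun _ => 0)); last by move=> i /H /negbTE ->.
by rewrite sum_nat_const_nat muln0.
Qed.

Lemma cXY n j b i : cX n j b i -> ~~ cY n j b i.
Proof. by rewrite /cX /cY => H; rewrite -leqNgt ltnW. Qed.
Lemma cYX n j b i : cY n j b i -> ~~ cX n j b i.
Proof. by rewrite /cX /cY => H; rewrite -leqNgt ltnW. Qed.

Section Count.
Variables (n j : nat) (b : bool).
Hypothesis Hn : 80 <= n.
Hypothesis Hj : j = 8 \/ 11 <= j.
Hypothesis Hjn : j + j <= n + 8.

Let L := j %/ 2 - 5.
Let A := (n + j) %/ 2.

Lemma midX_eq : \sum_(L <= i < L + 11) (cX n j b i : nat) = midVX b j.
Proof.
rewrite win_sum /midVX; congr sumn; apply/eq_in_map => c; rewrite mem_iota => /andP [_ Hc].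
rewrite /cX (@Dn_sel n b false) ?(@Dn_sel n b true) //; rewrite /L /adist; lia.
Qed.
Lemma midY_eq : \sum_(L <= i < L + 11) (cY n j b i : nat) = midVY b j.
Proof.
rewrite win_sum /midVY; congr sumn; apply/eq_in_map => c; rewrite mem_iota => /andP [_ Hc].
rewrite /cY (@Dn_sel n b false) ?(@Dn_sel n b true) //; rewrite /L /adist; lia.
Qed.

Lemma anti_args c : c < 11 ->
  [/\ adist (A - 5 + c) j = (A - j) - 5 + c,
      n - (A - 5 + c) = (A - j) + (n + j) %% 2 + 5 - c,
      A - 5 + c = (A - j) + j - 5 + c &
      n - ((A - j) - 5 + c) = (A - j) + (n + j) %% 2 + j + 5 - c].
Proof. move=> Hc; rewrite /A /adist; split; lia. Qed.

Lemma antiX_eq : \sum_(A - 5 <= i < A - 5 + 11) (cX n j b i : nat) =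
  antiVX b (A - j) ((n + j) %% 2) j.
Proof.
rewrite win_sum /antiVX; congr sumn; apply/eq_in_map => c; rewrite mem_iota => /andP [_ Hc].
have [E3 E2 E1 E4] := anti_args Hc.
by rewrite /cX /Dn E3 E2 E1 E4.
Qed.
Lemma antiY_eq : \sum_(A - 5 <= i < A - 5 + 11) (cY n j b i : nat) =
  antiVY b (A - j) ((n + j) %% 2) j.
Proof.
rewrite win_sum /antiVY; congr sumn; apply/eq_in_map => c; rewrite mem_iota => /andP [_ Hc].
have [E3 E2 E1 E4] := anti_args Hc.
by rewrite /cY /Dn E3 E2 E1 E4.
Qed.

Lemma split5 (F : nat -> nat) : \sum_(0 <= i < n) F i =
  \sum_(0 <= i < L) F i + \sum_(L <= i < L + 11) F i + \sum_(L + 11 <= i < A - 5) F i +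
  \sum_(A - 5 <= i < A - 5 + 11) F i + \sum_(A - 5 + 11 <= i < n) F i.
Proof.
rewrite (@big_cat_nat _ _ _ (A - 5 + 11)) /=; [|rewrite /A /L; lia|rewrite /A; lia].
rewrite (@big_cat_nat _ _ _ (A - 5) 0 (A - 5 + 11)) /=; [|rewrite /A /L; lia|lia].
rewrite (@big_cat_nat _ _ _ (L + 11) 0 (A - 5)) /=; [|lia|rewrite /A /L; lia].
rewrite (@big_cat_nat _ _ _ L 0 (L + 11)) /=; [|lia|lia].
by [].
Qed.

Lemma countX : \sum_(0 <= i < n) (cX n j b i : nat) =
  L + midVX b j + antiVX b (A - j) ((n + j) %% 2) j + (n - (A - 5 + 11)).
Proof.
rewrite split5 midX_eq antiX_eq.
rewrite (@seg_all 0 L) ?subn0; last by move=> i /andP [_ Hi]; apply: bulk1 => //; lia.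
rewrite (@seg_none (L + 11) (A - 5)); last first.
  move=> i /andP [h1 h2]; apply: cYX; apply: bulk2 => //; rewrite /L /A in h1 h2; lia.
rewrite (@seg_all (A - 5 + 11) n); last first.
  move=> i /andP [h1 h2]; apply: bulk3 => //; rewrite /A in h1; lia.
lia.
Qed.

Lemma countY : \sum_(0 <= i < n) (cY n j b i : nat) =
  midVY b j + ((A - 5) - (L + 11)) + antiVY b (A - j) ((n + j) %% 2) j.
Proof.
rewrite split5 midY_eq antiY_eq.
rewrite (@seg_none 0 L); last by move=> i /andP [_ Hi]; apply: cXY; apply: bulk1 => //; lia.
rewrite (@seg_all (L + 11) (A - 5)); last first.
  move=> i /andP [h1 h2]; apply: bulk2 => //; rewrite /L /A in h1 h2; lia.
rewrite (@seg_none (A - 5 + 11) n); last first.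
  move=> i /andP [h1 h2]; apply: cXY; apply: bulk3 => //; rewrite /A in h1; lia.
lia.
Qed.
End Count.

Lemma card_setP (T : finType) (P : pred T) : #|[set w | P w]| = \sum_w (P w : nat).
Proof. rewrite -sum1_card big_mkcond /=; apply: eq_bigr => w _; rewrite in_set; by case: (P w). Qed.

Lemma sum_GP n (F : bool -> nat -> nat) :
  \sum_(w : GPvert n) F w.1 w.2 = \sum_(0 <= i < n) F true i + \sum_(0 <= i < n) F false i.
Proof.
rewrite !big_mkord.
transitivity (\sum_(p : GPvert n | xpredT p.1 && xpredT p.2) F p.1 p.2); first by apply: eq_bigl.
by rewrite -(pair_big xpredT xpredT (fun b (i : 'I_n) => F b i)) big_bool.
Qed.

Section Pair.
Variables (n j : nat).
Hypothesis Hn : 24 <= n.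
Hypothesis Hj : j < n.
Definition px : GPvert n := (false, Ordinal (n_pos Hn)).
Definition py : GPvert n := (true, Ordinal Hj).

Lemma dist_pxpy : dist (GP n 4) px py = Dn n false true j.
Proof. by rewrite dist_GP //= /adist sub0n subn0. Qed.

Lemma cardWX : #|W (GP n 4) px py| =
  \sum_(0 <= i < n) (cX n j true i : nat) + \sum_(0 <= i < n) (cX n j false i : nat).
Proof.
rewrite /W card_setP -(@sum_GP n (fun b i => (cX n j b i : nat))).
apply: eq_bigr => [[b i]] _; rewrite !dist_GP //= /cX /adist subn0 sub0n addn0.
by [].
Qed.

Lemma cardWY : #|W (GP n 4) py px| =
  \sum_(0 <= i < n) (cY n j true i : nat) + \sum_(0 <= i < n) (cY n j false i : nat).
Proof.
rewrite /W card_setP -(@sum_GP n (fun b i => (cY n j b i : nat))).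
apply: eq_bigr => [[b i]] _; rewrite !dist_GP //= /cY /adist subn0 sub0n addn0.
by [].
Qed.
End Pair.

Lemma diam_bound n : 24 <= n -> diam (GP n 4) <= (n + 4) %/ 8 + 3.
Proof.
move=> Hn; apply/bigmax_leqP => [[b1 i1]] _; apply/bigmax_leqP => [[b2 i2]] _.
rewrite dist_GP //; apply: Dn_bound => //=.
rewrite /adist; have := ltn_ord i1; have := ltn_ord i2; lia.
Qed.

Definition SX n j := \sum_(0 <= i < n) (cX n j true i : nat) + \sum_(0 <= i < n) (cX n j false i : nat).
Definition SY n j := \sum_(0 <= i < n) (cY n j true i : nat) + \sum_(0 <= i < n) (cY n j false i : nat).

Lemma large_ne n j : 80 <= n -> (j = 8 \/ 11 <= j) -> j + j <= n + 8 -> SX n j != SY n j.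
Proof.
move=> Hn Hj Hjn; rewrite /SX /SY !countX // !countY //.
have h1 := midOK_all Hj; rewrite /midOK in h1.
have h2 := @antiOK_all ((n + j) %/ 2 - j) ((n + j) %% 2) j ltac:(lia) ltac:(lia) Hj.
rewrite /antiOK in h2.
apply/eqP; lia.
Qed.

Definition jsel n l :=
  if l == 3 then 8 else if l == 4 then 12 else
  if (l == (n + 4) %/ 8 + 2) && ((n %% 8 == 4) || (n %% 8 == 7)) then 4 * (l - 3) + 2
  else 4 * (l - 3) + 3.

Lemma jsel_ok n l : 80 <= n -> 3 <= l -> l <= (n + 4) %/ 8 + 2 ->
  let j := jsel n l in
  [/\ Dn n false true j = l, j = 8 \/ 11 <= j & j + j <= n + 8].
Proof.
move=> Hn Hl1 Hl2; rewrite /jsel /Dn /dl /duv.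
case: eqP => [->|H3]; first by split; lia.
case: eqP => [->|H4]; first by split; lia.
case: ifP => Hc.
  move/andP: Hc => [/eqP Htop /orP [/eqP Hm|/eqP Hm]]; split; lia.
have Hno' : ~ (l = (n + 4) %/ 8 + 2 /\ (n %% 8 = 4 \/ n %% 8 = 7)).
  by move=> [h1 [h2|h2]]; move: Hc; rewrite h1 h2 eqxx.
split; lia.
Qed.

Definition cntX n j := sumn [seq (cX n j true i : nat) | i <- iota 0 n] +
                       sumn [seq (cX n j false i : nat) | i <- iota 0 n].
Definition cntY n j := sumn [seq (cY n j true i : nat) | i <- iota 0 n] +
                       sumn [seq (cY n j false i : nat) | i <- iota 0 n].

Lemma sum_iota0 n (F : nat -> nat) : \sum_(0 <= i < n) F i = sumn [seq F i | i <- iota 0 n].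
Proof. by have := win_sum 0 n F; rewrite add0n. Qed.

Lemma SX_cnt n j : SX n j = cntX n j.
Proof. by rewrite /SX /cntX !sum_iota0. Qed.
Lemma SY_cnt n j : SY n j = cntY n j.
Proof. by rewrite /SY /cntY !sum_iota0. Qed.

Definition smallOK n := all (fun l => let j := jsel n l in
  (j < n) && (Dn n false true j == l) && (cntX n j != cntY n j)) (iota 3 ((n + 4) %/ 8)).

Lemma small_tab : all smallOK (iota 25 55).
Proof. vm_compute. reflexivity. Qed.

Theorem proposition3p3 (n : nat) : 24 < n ->
  forall l : nat, 3 <= l -> l < diam (GP n 4) ->
  ~ dist_balanced (GP n 4) l.
Proof.
move=> Hn l Hl3 Hld Hbal.
have Hn' : 24 <= n by lia.
have Hdb := diam_bound Hn'.
have [Hjn Hdl Hne] : [/\ jsel n l < n, Dn n false true (jsel n l) = l &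
                        SX n (jsel n l) != SY n (jsel n l)].
  case: (ltnP n 80) => Hn80.
  - have T := small_tab; move/allP: T => /(_ n).
    rewrite mem_iota => /(_ ltac:(lia)) /allP /(_ l).
    rewrite mem_iota => /(_ ltac:(lia)) /=.
    rewrite SX_cnt SY_cnt => /andP [/andP [h1 /eqP h2] h3].
    by split.
  - have [h1 h2 h3] := @jsel_ok n l Hn80 Hl3 ltac:(lia).
    split => //; [lia | exact: large_ne].
have := Hbal (px Hn') (py Hjn).
rewrite dist_pxpy Hdl => /(_ erefl).
rewrite cardWX cardWY => E.
by move/eqP: Hne; apply; rewrite /SX /SY E.
Qed.
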